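(* Let $P(X)$ be a complex polynomial of degree $n \geq 2$ and $U(X)$ a quadratic polynomial with non-zero discriminant such that \[ U(X)P''(X) - (n-1)U'(X)P'(X) + \frac{n(n-1)}{2}U''(X)P(X) = 0. \] Set $Y_{1}(X) = 2U(X)P'(X) - nU'(X)P(X)$, $h = \frac{n^{2}-1}{4}\left(U'(X)^{2} - 2U(X)U''(X)\right)$ (a constant) and $\lambda = h/(n^{2}-1)$. Define polynomials $A_{r}(X), B_{r}(X)$ by \[ A_{0} = \tfrac{2h}{3},\quad A_{1} = \tfrac{2(n+1)}{3}\left(UP' - \tfrac{n-1}{2}U'P\right),\quad B_{0} = \tfrac{2hX}{3},\quad B_{1} = XA_{1} - \tfrac{2(n+1)UP}{3}, \] and for $r \geq 1$ \[ \lambda(n(r+1)-1)A_{r+1} = \left(r+\tfrac12\right)Y_{1}A_{r} - (nr+1)P^{2}A_{r-1}, \] \[ \lambda(n(r+1)-1)B_{r+1} = \left(r+\tfrac12\right)Y_{1}B_{r} - (nr+1)P^{2}B_{r-1}. \] Let $a,b,c,d$ be complex numbers with $ad-bc \neq 0$, and define $K_{r}(X) = aA_{r}(X) + bB_{r}(X)$ and $L_{r}(X) = cA_{r}(X) + dB_{r}(X)$. If $x$ is such that $U(x)P(x) \neq 0$, then \[ K_{r+1}(x)L_{r}(x) \neq K_{r}(x)L_{r+1}(x) \] for all $r \geq 0$. *)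

(* Defs.v *)
From HB Require Import structures.
From mathcomp Require Import all_boot all_order all_algebra.
From mathcomp Require Import complex.
From mathcomp Require Import reals.
Set Implicit Arguments. Unset Strict Implicit. Unset Printing Implicit Defensive.
Import Order.TTheory GRing.Theory Num.Theory.
Local Open Scope ring_scope.

(* Generic two-term recursion: returns (x_r, x_{r+1}) where
   x_0 = x0, x_1 = x1 and x_{s+1} = step s x_{s-1} x_s for s >= 1. *)
Fixpoint rec2 {T : Type} (step : nat -> T -> T -> T) (x0 x1 : T) (r : nat)
  : T * T :=
  match r with
  | 0 => (x0, x1)
  | r'.+1 => let: (u, v) := rec2 step x0 x1 r' in (v, step r'.+1 u v)
  end.

Section Defs.
Variable (F : fieldType).
Implicit Types (P U : {poly F}) (n : nat).

Definition Y1 n P U : {poly F} := 2%:R *: (U * P^`()) - n%:R *: (U^`() * P).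

(* h = (n^2-1)/4 (U'^2 - 2 U U''), a constant polynomial; we take its
   constant coefficient. *)
Definition hconst n U : F :=
  ((n ^ 2 - 1)%:R / 4%:R) * (U^`() ^+ 2 - 2%:R *: (U * U^`(2)))`_0.

Definition lam n U : F := hconst n U / (n ^ 2 - 1)%:R.

Definition ABstep n P U (r : nat) (u v : {poly F}) : {poly F} :=
  (lam n U * (n * r.+1 - 1)%N%:R)^-1 *:
    ((r%:R + 2%:R^-1) *: (Y1 n P U * v) - (n * r + 1)%N%:R *: (P ^+ 2 * u)).

Definition A0 n U : {poly F} := ((2%:R / 3%:R) * hconst n U)%:P.
Definition A1 n P U : {poly F} :=
  (2%:R * (n.+1)%:R / 3%:R) *: (U * P^`() - ((n - 1)%:R / 2%:R) *: (U^`() * P)).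
Definition B0 n U : {poly F} := ((2%:R / 3%:R) * hconst n U) *: 'X.
Definition B1 n P U : {poly F} :=
  'X * A1 n P U - (2%:R * (n.+1)%:R / 3%:R) *: (U * P).

Definition Apoly n P U (r : nat) : {poly F} :=
  (rec2 (ABstep n P U) (A0 n U) (A1 n P U) r).1.
Definition Bpoly n P U (r : nat) : {poly F} :=
  (rec2 (ABstep n P U) (B0 n U) (B1 n P U) r).1.

End Defs.

(* Main.v *)
Require Import Defs.
From HB Require Import structures.
From mathcomp Require Import all_boot all_order all_algebra.
From mathcomp Require Import complex.
From mathcomp Require Import reals.
From mathcomp Require Import ring.
Import Order.TTheory GRing.Theory Num.Theory.
Local Open Scope ring_scope.

Lemma rec2SS (T : Type) (step : nat -> T -> T -> T) x0 x1 r :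
  (rec2 step x0 x1 r.+2).1 =
  step r.+1 (rec2 step x0 x1 r).1 (rec2 step x0 x1 r.+1).1.
Proof. by rewrite /=; case: (rec2 step x0 x1 r). Qed.

Lemma rec2_0 (T : Type) (step : nat -> T -> T -> T) x0 x1 :
  (rec2 step x0 x1 0).1 = x0.
Proof. by []. Qed.
Lemma rec2_1 (T : Type) (step : nat -> T -> T -> T) x0 x1 :
  (rec2 step x0 x1 1).1 = x1.
Proof. by []. Qed.

Theorem lemma2p7 (R : realType) (n : nat) (P U : {poly R[i]})
  (a b c d : R[i]) (x : R[i]) :
  (2 <= n)%N ->
  size P = n.+1 ->
  size U = 3%N ->
  U`_1 ^+ 2 - 4%:R * U`_2 * U`_0 != 0 ->
  U * P^`(2) - (n - 1)%:R *: (U^`() * P^`())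
    + ((n * (n - 1))%:R / 2%:R) *: (U^`(2) * P) = 0 ->
  a * d - b * c != 0 ->
  U.[x] * P.[x] != 0 ->
  forall r : nat,
    let K s := a *: Apoly n P U s + b *: Bpoly n P U s in
    let L s := c *: Apoly n P U s + d *: Bpoly n P U s in
    (K r.+1).[x] * (L r).[x] != (K r).[x] * (L r.+1).[x].
Proof.
move=> n2 _ _ disc _ adbc UP r; cbv zeta beta.
have nat0 : forall m : nat, (m%:R : R[i]) != 0 -> True by [].
have natn0 : forall m : nat, (0 < m)%N -> (m%:R : R[i]) != 0.
  by move=> m m0; rewrite pnatr_eq0 -lt0n.
have hc : hconst n U != 0.
  rewrite /hconst mulf_neq0 //.
    rewrite mulf_neq0 ?invr_eq0 ?natn0 //.
    by rewrite subn_gt0 (@leq_trans (2 ^ 2)) // leq_exp2r.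
  rewrite [X in X != 0](_ : _ = U`_1 ^+ 2 - 4%:R * U`_2 * U`_0) //.
  rewrite coefB coefZ !coef0M ?coef_deriv ?coef_derivn /=.
  ring.
have lamn : lam n U != 0.
  rewrite /lam mulf_neq0 ?invr_eq0 ?natn0 //.
  by rewrite subn_gt0 (@leq_trans (2 ^ 2)) // leq_exp2r.
set A := Apoly n P U; set B := Bpoly n P U.
pose w s := (A s.+1).[x] * (B s).[x] - (A s).[x] * (B s.+1).[x].
suff : w r != 0.
  apply: contra => /eqP H; apply/eqP.
  have -> : w r = (a * d - b * c)^-1 * ((a *: A r.+1 + b *: B r.+1).[x] * (c *: A r + d *: B r).[x] - (a *: A r + b *: B r).[x] * (c *: A r.+1 + d *: B r.+1).[x]).
    rewrite /w !(hornerD, hornerN, hornerZ, hornerM, hornerX, hornerC, horner_exp); field; exact: adbc.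
  by rewrite H subrr mulr0.
have Px : P.[x] != 0 by move: UP; rewrite mulf_eq0 negb_or => /andP[].
have Ux : U.[x] != 0 by move: UP; rewrite mulf_eq0 negb_or => /andP[].
elim: r => [|r IH].
  have -> : w 0%N = (2%:R / 3%:R * hconst n U) * (2%:R * (n.+1)%:R / 3%:R) * (U.[x] * P.[x]).
    rewrite /w /A /B /Apoly /Bpoly (rec2_1 _ _ (A0 n U) (A1 n P U)) (rec2_1 _ _ (B0 n U) (B1 n P U)) (rec2_0 _ _ (A0 n U) (A1 n P U)) (rec2_0 _ _ (B0 n U) (B1 n P U)) /B1 /B0 /A0 !(hornerD, hornerN, hornerZ, hornerM, hornerX, hornerC, horner_exp); ring.
  move: (hconst n U) hc => h hc.
  by rewrite !mulf_neq0 ?invr_eq0 ?natn0.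
have eA : A r.+2 = ABstep n P U r.+1 (A r) (A r.+1) by rewrite /A /Apoly rec2SS.
have eB : B r.+2 = ABstep n P U r.+1 (B r) (B r.+1) by rewrite /B /Bpoly rec2SS.
have -> : w r.+1 = (lam n U * (n * r.+2 - 1)%N%:R)^-1 * (n * r.+1 + 1)%N%:R
    * P.[x] ^+ 2 * w r.
  rewrite /w eA eB /ABstep !(hornerD, hornerN, hornerZ, hornerM, hornerX, hornerC, horner_exp); ring.
rewrite !mulf_neq0 ?invr_eq0 ?expf_neq0 ?natn0 ?addn1 //.
rewrite mulf_neq0 // natn0 // subn_gt0 (leq_trans n2) // leq_pmulr.
by []. by [].
Qed.
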